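(* Let $n,r\ge 1$ and let $\mathcal{A}\subseteq \mathcal{I}^{(r)}(K_n^* )$ be an intersecting family. Then there exists an intersecting family $\mathcal{B}\subseteq\mathcal{I}^{(r)}(K_n^* )$ such that (1) $|\mathcal{A}|=|\mathcal{B}|$, and (2) for all $B_1,B_2\in\mathcal{B}$, $B_1\cap B_2\not\subseteq \{x_1,\dots,x_n\}=V(K_n)$.
   Context: $\mathcal{I}^{(r)}(G)$ denotes the family of all independent $r$-sets (sets of $r$ pairwise non-adjacent vertices) of a graph $G$. A family of sets is intersecting if every two of its members have nonempty intersection. For a graph $G$ with vertices $x_1,\dots,x_n$, the pendant graph $G^*$ has vertex set $\{x_1,\dots,x_n\}\sqcup\{p_1,\dots,p_n\}$ and edge set $E(G)\sqcup\{x_1p_1,\dots,x_np_n\}$; $K_n^*$ is the pendant graph of the complete graph $K_n$ on $x_1,\dots,x_n$. *)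

(* Defs.v *)
From mathcomp Require Import all_boot.
Set Implicit Arguments. Unset Strict Implicit. Unset Printing Implicit Defensive.

(* Vertices of the pendant graph K_n^* : inl i = x_i (clique vertex), inr i = p_i (pendant). *)
Definition pvert (n : nat) : finType := ('I_n + 'I_n)%type.

Definition Knstar_adj (n : nat) (u v : pvert n) : bool :=
  match u, v with
  | inl i, inl j => i != j
  | inl i, inr j => i == j
  | inr i, inl j => i == j
  | inr _, inr _ => false
  end.

Definition independent (T : finType) (e : rel T) (S : {set T}) : bool :=
  [forall x in S, forall y in S, ~~ e x y].

Definition indep_rsets (T : finType) (e : rel T) (r : nat) : {set {set T}} :=
  [set S : {set T} | independent e S && (#|S| == r)].

Definition intersecting (T : finType) (F : {set {set T}}) : bool :=
  [forall A in F, forall B in F, A :&: B != set0].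

Definition clique_part (n : nat) : {set pvert n} := [set v : pvert n | if v is inl _ then true else false].

(* Main.v *)
Require Import Defs.
From mathcomp Require Import all_boot.
Set Implicit Arguments. Unset Strict Implicit. Unset Printing Implicit Defensive.

Section Aux.
Variable n : nat.
Local Notation V := (pvert n).
Local Notation adj := (@Knstar_adj n).

Lemma indep_adj (S : {set V}) x y :
  independent adj S -> x \in S -> y \in S -> ~~ adj x y.
Proof. by move=> /forall_inP H xS yS; move/forall_inP: (H x xS) => /(_ y yS). Qed.

Lemma indepI (S : {set V}) :
  (forall x y, x \in S -> y \in S -> ~~ adj x y) -> independent adj S.
Proof. by move=> H; apply/forall_inP=> x xS; apply/forall_inP=> y yS; apply: H. Qed.

Lemma interP (F : {set {set V}}) S T :
  intersecting F -> S \in F -> T \in F -> S :&: T != set0.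
Proof. by move=> /forall_inP H SF TF; move/forall_inP: (H S SF) => /(_ T TF). Qed.

Lemma interI (F : {set {set V}}) :
  (forall S T, S \in F -> T \in F -> S :&: T != set0) -> intersecting F.
Proof. by move=> H; apply/forall_inP=> x xS; apply/forall_inP=> y yS; apply: H. Qed.

Definition sh (i : 'I_n) (S : {set V}) : {set V} := (inr i : V) |: (S :\ (inl i : V)).

Lemma in_sh i S y : (y \in sh i S) = (y == inr i) || ((y != inl i) && (y \in S)).
Proof. by rewrite /sh !inE. Qed.

Lemma pi_notin i (S : {set V}) :
  independent adj S -> (inl i : V) \in S -> (inr i : V) \notin S.
Proof. move=> HS xS; apply/negP=> pS; have := indep_adj HS xS pS; by rewrite /= eqxx. Qed.

Lemma one_clique i (S : {set V}) y :
  independent adj S -> (inl i : V) \in S -> y \in S -> y \in clique_part n -> y = inl i.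
Proof.
move=> HS xS yS; case: y yS => [j|j] yS; rewrite inE // => _.
case: (eqVneq j i) => [->//|ne]; have := indep_adj HS xS yS; by rewrite /= eq_sym ne.
Qed.

Lemma sh_indep i S : independent adj S -> (inl i : V) \in S -> independent adj (sh i S).
Proof.
move=> HS xS; apply: indepI => x y; rewrite !in_sh.
case/orP=> [/eqP->|/andP[nx xS']]; case/orP=> [/eqP->|/andP[ny yS']] //=.
- by case: y ny yS' => [j|j] //= ny _; apply: contra ny => /eqP->.
- exact: indep_adj HS xS' yS'.
Qed.

Lemma sh_card i S : independent adj S -> (inl i : V) \in S -> #|sh i S| = #|S|.
Proof.
move=> HS xS; rewrite /sh cardsU1 (cardsD1 (inl i : V) S) xS.
have -> : (inr i : V) \in S :\ inl i = false by rewrite !inE (negbTE (pi_notin HS xS)) andbF.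
by rewrite add1n.
Qed.

Lemma sh_noclique i S y : independent adj S -> (inl i : V) \in S ->
  y \in sh i S -> y \notin clique_part n.
Proof.
move=> HS xS; rewrite in_sh; case/orP=> [/eqP->|/andP[ny yS]]; first by rewrite inE.
by apply/negP=> yc; rewrite (one_clique HS xS yS yc) eqxx in ny.
Qed.

Lemma sh_K i S : independent adj S -> (inl i : V) \in S ->
  (inl i : V) |: (sh i S :\ inr i) = S.
Proof.
move=> HS xS; apply/setP=> y; rewrite !inE.
case: (eqVneq y (inl i)) => [->|ne1] /=; first by rewrite xS.
case: (eqVneq y (inr i)) => [->|ne2] //=.
by rewrite (negbTE (pi_notin HS xS)).
Qed.

Definition meas (B : {set {set V}}) := #|[set S in B | S :&: clique_part n != set0]|.

Lemma compress (B : {set {set V}}) r B1 B2 :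
  B \subset indep_rsets adj r -> intersecting B -> B1 \in B -> B2 \in B ->
  B1 :&: B2 \subset clique_part n ->
  exists B' : {set {set V}}, [/\ B' \subset indep_rsets adj r, intersecting B', #|B'| = #|B|
                 & meas B' < meas B].
Proof.
move=> HB IB b1 b2 Hsub.
have HBi : forall S, S \in B -> independent adj S /\ #|S| = r.
  by move=> S /(subsetP HB); rewrite inE => /andP[-> /eqP].
have [v vI] := set0Pn _ (interP IB b1 b2).
have vc := subsetP Hsub v vI.
case: v vI vc => [i|i] vI; rewrite inE // => _.
move: vI; rewrite inE => /andP[xB1 xB2].
have [ind1 _] := HBi _ b1; have [ind2 _] := HBi _ b2.
have nB1 : sh i B1 \notin B.
  apply/negP => sB; have [y] := set0Pn _ (interP IB sB b2).
  rewrite inE in_sh => /andP[/orP[/eqP->|/andP[ny yB1]] yB2].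
    by move: (pi_notin ind2 xB2); rewrite yB2.
  have yc : y \in clique_part n by apply: (subsetP Hsub); rewrite inE yB1.
  by rewrite (one_clique ind1 xB1 yB1 yc) eqxx in ny.
pose D := [set S in B | ((inl i : V) \in S) && (sh i S \notin B)].
have HD : forall S, S \in D -> [/\ S \in B, (inl i : V) \in S, sh i S \notin B,
                                  independent adj S & #|S| = r].
  move=> S; rewrite inE => /andP[SB /andP[xS nS]]; have [? ?] := HBi S SB; by split.
have b1D : B1 \in D by rewrite inE b1 xB1 nB1.
pose N := (B :\: D) :|: [set sh i S | S in D].
exists N; split.
- apply/subsetP => S; rewrite inE => /orP[|/imsetP[T TD ->]].
    by rewrite inE => /andP[_ SB]; apply: (subsetP HB).
  have [_ xT _ iT cT] := HD T TD.
  by rewrite inE sh_indep // sh_card // cT eqxx.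
- have key : forall S T, S \in D -> T \in B :\: D -> sh i S :&: T != set0.
    move=> S T SD; rewrite inE => /andP[TnD TB].
    have [SB xS _ iS _] := HD S SD; have [iT _] := HBi T TB.
    case: (boolP ((inl i : V) \in T)) => xT.
      have sTB : sh i T \in B.
        by apply: contraR TnD => h; rewrite inE TB xT h.
      have [y] := set0Pn _ (interP IB SB sTB).
      rewrite inE in_sh => /andP[yS /orP[/eqP yp|/andP[ny yT]]].
        by move: (pi_notin iS xS); rewrite -yp yS.
      by apply/set0Pn; exists y; rewrite inE in_sh ny yS yT orbT.
    have [y] := set0Pn _ (interP IB SB TB); rewrite inE => /andP[yS yT].
    have ny : y != inl i by apply: contraNneq xT => <-.
    by apply/set0Pn; exists y; rewrite inE in_sh ny yS yT orbT.
  apply: interI => S T; rewrite !in_setU.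
  case/orP=> [SBD|/imsetP[S' S'D ->]]; case/orP=> [TBD|/imsetP[T' T'D ->]].
  + by move: SBD TBD; rewrite !in_setD => /andP[_ SB] /andP[_ TB]; apply: interP IB SB TB.
  + by rewrite setIC; apply: key; done.
  + by apply: key; done.
  + by apply/set0Pn; exists (inr i : V); rewrite !inE !eqxx.
- rewrite cardsU.
  have -> : (B :\: D) :&: [set sh i S | S in D] = set0.
    apply/setP=> S; rewrite !inE; apply/negP => /andP[/andP[_ SB] /imsetP[T TD eS]].
    have [_ _ nT _ _] := HD T TD; by rewrite -eS SB in nT.
  rewrite cards0 subn0 card_in_imset.
    have DB : D \subset B by apply/subsetP=> S /HD[].
    by rewrite -(cardsID D B) (setIidPr DB) addnC.
  move=> S T SD TD e; have [_ xS _ iS _] := HD S SD; have [_ xT _ iT _] := HD T TD.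
  by rewrite -(sh_K iS xS) -(sh_K iT xT) e.
- apply: proper_card; apply/properP; split.
    apply/subsetP => S; rewrite !inE => /andP[/orP[/andP[_ SB] Sc|/imsetP[T TD eS] Sc]].
      by rewrite SB.
    have [_ xT _ iT _] := HD T TD.
    have [y] := set0Pn _ Sc; rewrite inE eS => /andP[y1 y2].
    by rewrite (negbTE (sh_noclique iT xT y1)) in y2.
  exists B1.
    rewrite inE b1 /=; apply/set0Pn; exists (inl i : V); by rewrite !inE xB1.
  rewrite in_set /N in_setU in_setD b1D /= negb_and; apply/orP; left.
  apply/negP => /imsetP[T TD eT]; have [_ xT _ iT _] := HD T TD.
  by move: (sh_noclique iT xT (y := inl i)); rewrite -eT xB1 inE => /(_ isT).
Qed.
End Aux.

Theorem lemma3 (n r : nat) (hn : 1 <= n) (hr : 1 <= r)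
  (A : {set {set pvert n}}) :
  A \subset indep_rsets (@Knstar_adj n) r ->
  intersecting A ->
  exists B : {set {set pvert n}},
    [/\ B \subset indep_rsets (@Knstar_adj n) r,
        intersecting B,
        #|A| = #|B| &
        forall B1 B2, B1 \in B -> B2 \in B ->
          ~~ (B1 :&: B2 \subset clique_part n)].
Proof.
move=> HA IA.
pose P k := [exists B : {set {set pvert n}}, [&& B \subset indep_rsets (@Knstar_adj n) r,
   intersecting B, #|A| == #|B| & meas B == k]].
have ex : exists k, P k by exists (meas A); apply/existsP; exists A; rewrite HA IA !eqxx.
case: (ex_minnP ex) => k /existsP[B /and4P[H1 H2 /eqP H3 /eqP H4]] Hmin.
exists B; split => // B1 B2 b1 b2; apply/negP => Hsub.
have [B' [H1' H2' H3' H4']] := compress H1 H2 b1 b2 Hsub.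
have : k <= meas B'.
  apply: Hmin; apply/existsP; exists B'; by rewrite H1' H2' H3' H3 !eqxx.
by rewrite -H4 leqNgt H4'.
Qed.
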